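(* Let $\mathfrak M\models S_{\overline\alpha}^\forall$ and $\mathfrak A,\mathfrak B\in K_{\overline\alpha}$ with $\mathfrak B\cap\mathfrak M=\mathfrak A$ (so $\mathfrak A$ is a common substructure of $\mathfrak M$ and $\mathfrak B$), and let $\mathfrak N=\mathfrak M\oplus_{\mathfrak A}\mathfrak B$. (1) If $\mathfrak A\le\mathfrak B$ or $\mathfrak A\le\mathfrak M$, then $\mathfrak N\models S_{\overline\alpha}^\forall$. (2) If $\mathfrak A\le\mathfrak B$, then $\mathfrak N$ preserves closures for $\mathfrak M$. (3) If $\mathfrak A\le\mathfrak M$, then $\mathfrak B\le\mathfrak N$. (4) If ($\mathfrak A\le\mathfrak B$ or $\mathfrak A\le\mathfrak M$) and $\mathfrak M$ has finite closures, then $\mathfrak N$ has finite closures.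
   Context: Fix a finite relational language $L$ in which every relation symbol has arity at least $2$. $K_L$ is the class of all finite $L$-structures (including the empty one) in which every relation symbol is interpreted symmetrically and irreflexively. Fix $\overline\alpha:L\to(0,1]$, writing $\overline\alpha_E=\overline\alpha(E)$, such that it is not the case that all symbols of $L$ are binary and $\overline\alpha_E=1$ for all $E$. For $\mathfrak A\in K_L$ let $N_E(\mathfrak A)$ be the number of subsets of $A$ on which $E$ holds and $\delta(\mathfrak A)=|A|-\sum_{E}\overline\alpha_E N_E(\mathfrak A)$; subsets of a structure are identified with induced substructures. $K_{\overline\alpha}=\{\mathfrak A\in K_L:\delta(\mathfrak A')\ge0\text{ for all substructures }\mathfrak A'\subseteq\mathfrak A\}$. For $\mathfrak A\subseteq\mathfrak B$ in $K_L$, $\mathfrak A\le\mathfrak B$ means $\delta(\mathfrak A)\le\delta(\mathfrak A')$ for all $\mathfrak A\subseteq\mathfrak A'\subseteq\mathfrak B$; for finite $\mathfrak A\subseteq\mathfrak X$ with $\mathfrak X$ arbitrary, $\mathfrak A\le\mathfrak X$ means $\mathfrak A\le\mathfrak C$ for all finite $\mathfrak A\subseteq\mathfrak C\subseteq\mathfrak X$. $(\mathfrak A,\mathfrak B)$ is a minimal pair if $\mathfrak A\subseteq\mathfrak B$, $\mathfrak A\le\mathfrak C$ for all $\mathfrak A\subseteq\mathfrak C\subsetneq\mathfrak B$, but $\mathfrak A\not\le\mathfrak B$. A subset $X$ of a structure $\mathfrak Z$ is closed in $\mathfrak Z$ if for every finite $A\subseteq X$ and every minimal pair $(A,B)$ with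 $B\subseteq Z$, $B\subseteq X$. $S_{\overline\alpha}$ is the theory whose models are those structures in which every finite substructure lies in $K_{\overline\alpha}$ and, for all $\mathfrak A\le\mathfrak B$ in $K_{\overline\alpha}$, every embedding of $\mathfrak A$ extends to an embedding of $\mathfrak B$; $S_{\overline\alpha}^\forall$ is the set of universal sentences of $S_{\overline\alpha}$ (its models are the $L$-structures all of whose finite substructures lie in $K_{\overline\alpha}$). The free join $\mathfrak M\oplus_{\mathfrak A}\mathfrak B$ is the structure with universe $M\cup B$ whose relations are exactly $E^{\mathfrak M}\cup E^{\mathfrak B}$ for each $E\in L$. For $\mathfrak M\subseteq\mathfrak N$, $\mathfrak N$ preserves closures for $\mathfrak M$ if every $X\subseteq M$ closed in $\mathfrak M$ is closed in $\mathfrak N$. A structure has finite closures if each of its finite subsets is contained in a finite subset strong in the structure. *)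

(* Defs.v *)
From HB Require Import structures.
From mathcomp Require Import all_boot all_order all_algebra.
From mathcomp Require Import finmap.
From mathcomp Require Import reals.
Set Implicit Arguments. Unset Strict Implicit. Unset Printing Implicit Defensive.
Import Order.TTheory GRing.Theory Num.Theory.
Local Open Scope fset_scope.
Local Open Scope ring_scope.

(* A symmetric irreflexive relation symbol E is represented, as in the
   paper, by the set of (ar E)-element subsets of the universe on which E holds. *)
Record Lstr (L : Type) (U : choiceType) := LStr { dom : U -> Prop ; rel : L -> {fset U} -> bool }.

Section Defs.
Variables (L : finType) (U : choiceType) (R : realType).

Definition fin_str (F : {fset U}) (r : L -> {fset U} -> bool) : Lstr L U :=
  LStr (fun x => x \in F) r.

Definition wf (ar : L -> nat) (S : Lstr L U) : Prop :=
  forall E s, rel S E s -> #|` s| = ar E /\ (forall x, x \in s -> dom S x).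

Definition fsub_dom (F : {fset U}) (S : Lstr L U) : Prop :=
  forall x, x \in F -> dom S x.

Definition is_substr (A S : Lstr L U) : Prop :=
  (forall x, dom A x -> dom S x) /\
  (forall E s, (forall x, x \in s -> dom A x) -> rel A E s = rel S E s).

Definition join (M B : Lstr L U) : Lstr L U :=
  LStr (fun x => dom M x \/ dom B x) (fun E s => rel M E s || rel B E s).

Variable alpha : L -> R.

Definition NE (r : L -> {fset U} -> bool) (E : L) (F : {fset U}) : nat :=
  #|` [fset s in fpowerset F | r E s]|.

Definition delta (r : L -> {fset U} -> bool) (F : {fset U}) : R :=
  (#|` F|)%:R - \sum_(E : L) alpha E * (NE r E F)%:R.

Definition inK (r : L -> {fset U} -> bool) (F : {fset U}) : Prop :=
  forall F', F' `<=` F -> 0 <= delta r F'.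

Definition models_Sforall (S : Lstr L U) : Prop :=
  forall F, fsub_dom F S -> inK (rel S) F.

Definition le_in (r : L -> {fset U} -> bool) (A C : {fset U}) : Prop :=
  A `<=` C /\ forall C', A `<=` C' -> C' `<=` C -> delta r A <= delta r C'.

Definition strong (S : Lstr L U) (A : {fset U}) : Prop :=
  forall C, A `<=` C -> fsub_dom C S -> le_in (rel S) A C.

Definition minpair (r : L -> {fset U} -> bool) (A B : {fset U}) : Prop :=
  A `<=` B /\ (forall C, A `<=` C -> C `<` B -> le_in r A C) /\ ~ le_in r A B.

Definition closed (Z : Lstr L U) (X : U -> Prop) : Prop :=
  forall A B : {fset U}, (forall x, x \in A -> X x) -> fsub_dom B Z ->
    minpair (rel Z) A B -> forall x, x \in B -> X x.

Definition preserves_closures (M N : Lstr L U) : Prop :=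
  forall X : U -> Prop, (forall x, X x -> dom M x) -> closed M X -> closed N X.

Definition finite_closures (S : Lstr L U) : Prop :=
  forall F, fsub_dom F S -> exists G, [/\ F `<=` G, fsub_dom G S & strong S G].

End Defs.

(* Main.v *)
Require Import Defs.
From HB Require Import structures.
From mathcomp Require Import all_boot all_order all_algebra.
From mathcomp Require Import finmap.
From mathcomp Require Import reals.
From mathcomp Require Import lra.
Import Order.TTheory GRing.Theory Num.Theory.
Local Open Scope fset_scope.
Local Open Scope ring_scope.

Section G.
Variables (L : finType) (U : choiceType) (R : realType) (alpha : L -> R).

Lemma memNE (r : L -> {fset U} -> bool) E F s :
  (s \in [fset s in fpowerset F | r E s]) = (s `<=` F) && r E s.
Proof. by rewrite !inE fpowersetE. Qed.

Lemma NE_eq (r1 r2 : L -> {fset U} -> bool) F : (forall E s, s `<=` F -> r1 E s = r2 E s) ->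
  forall E, NE r1 E F = NE r2 E F.
Proof.
move=> H E; rewrite /NE; congr (#|` _|); apply/fsetP => s.
rewrite !memNE; case sF: (s `<=` F) => //=; exact: H.
Qed.

Lemma delta_eq (r1 r2 : L -> {fset U} -> bool) F : (forall E s, s `<=` F -> r1 E s = r2 E s) ->
  delta alpha r1 F = delta alpha r2 F.
Proof.
move=> H; rewrite /delta; congr (_ - _); apply: eq_bigr => E _.
by rewrite (@NE_eq r1 r2 F H).
Qed.

Lemma NE_submod (r : L -> {fset U} -> bool) E X Y :
  (NE r E X + NE r E Y <= NE r E (X `|` Y) + NE r E (X `&` Y))%N.
Proof.
rewrite /NE.
set SX := [fset s in fpowerset X | r E s].
set SY := [fset s in fpowerset Y | r E s].
have -> : [fset s in fpowerset (X `&` Y) | r E s] = SX `&` SY.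
  apply/fsetP => s; rewrite inE !memNE fsubsetI.
  by case: (s `<=` X); case: (s `<=` Y); case: (r E s).
rewrite -cardfsUI leq_add2r; apply: fsubset_leq_card.
apply/fsubsetP => s; rewrite inE !memNE => /orP [/andP [sX ->]|/andP [sY ->]];
  rewrite andbT.
- exact: fsubset_trans sX (fsubsetUl _ _).
- exact: fsubset_trans sY (fsubsetUr _ _).
Qed.

Lemma delta_submod (r : L -> {fset U} -> bool) X Y : (forall E, 0 <= alpha E) ->
  delta alpha r (X `|` Y) + delta alpha r (X `&` Y) <= delta alpha r X + delta alpha r Y.
Proof.
move=> Ha; rewrite /delta.
have Hc := cardfsUI X Y.
rewrite addrACA [X in _ <= X]addrACA -!natrD Hc lerD2l -!opprD lerN2 -!big_split /=.
apply: ler_sum => E _; rewrite -!mulrDr; apply: ler_wpM2l => //.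
by rewrite -!natrD ler_nat NE_submod.
Qed.

Lemma minpair_eq (r1 r2 : L -> {fset U} -> bool) A B : (forall E s, s `<=` B -> r1 E s = r2 E s) ->
  minpair alpha r1 A B -> minpair alpha r2 A B.
Proof.
move=> H.
have leq : forall C, C `<=` B -> le_in alpha r1 A C <-> le_in alpha r2 A C.
  move=> C CB; rewrite /le_in; split=> [[AC HC]|[AC HC]]; split=> // C' AC' C'C.
  - rewrite -!(@delta_eq r1 r2) ?HC //; move=> E s sC; apply: H.
      exact: fsubset_trans sC (fsubset_trans C'C CB).
    exact: fsubset_trans sC (fsubset_trans (fsubset_trans AC' C'C) CB).
  - rewrite !(@delta_eq r1 r2) ?HC //; move=> E s sC; apply: H.
      exact: fsubset_trans sC (fsubset_trans C'C CB).
    exact: fsubset_trans sC (fsubset_trans (fsubset_trans AC' C'C) CB).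
move=> [AB [HC HN]]; split=> //; split.
- move=> C AC CB; apply/leq; [exact: fproper_sub | exact: HC].
- by move=> H2; apply: HN; apply/(leq B (fsubset_refl B)).
Qed.
End G.

Section S.
Variables (L : finType) (U : choiceType) (R : realType) (ar : L -> nat) (alpha : L -> R).
Variables (M : Lstr L U) (FA FB : {fset U}) (rA rB : L -> {fset U} -> bool).
Hypotheses (Ha : forall E, 0 <= alpha E) (wfM : wf ar M) (wfB : wf ar (fin_str FB rB))
  (subAM : is_substr (fin_str FA rA) M) (subAB : is_substr (fin_str FA rA) (fin_str FB rB))
  (HAB : forall x, x \in FA <-> (x \in FB /\ dom M x)).

Local Notation N := (join M (fin_str FB rB)).
Definition XM F := F `\` (FB `\` FA).

Lemma FAB x : x \in FA -> x \in FB. Proof. by move/HAB=> []. Qed.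
Lemma FBM x : x \in FB -> dom M x -> x \in FA. Proof. by move=> h1 h2; apply/HAB. Qed.

Lemma inXM F x : (x \in XM F) = (x \in F) && ((x \in FB) ==> (x \in FA)).
Proof. rewrite /XM !in_fsetD; by case: (x \in F); case: (x \in FB); case: (x\in FA). Qed.

Lemma XMU F : XM F `|` (F `&` FB) = F.
Proof.
apply/fsetP => x; rewrite in_fsetU inXM in_fsetI.
by case: (x \in F); case: (x \in FB); case: (x\in FA).
Qed.

Lemma XMI F : XM F `&` (F `&` FB) = F `&` FA.
Proof.
apply/fsetP => x; rewrite !in_fsetI inXM.
have := @FAB x; case: (x \in FA) => [/(_ isT) ->|_];
  by case: (x \in F); case: (x \in FB).
Qed.

Lemma NE_decomp E F : (NE (Defs.rel N) E F + NE rA E (F `&` FA) =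
  NE (Defs.rel M) E (XM F) + NE rB E (F `&` FB))%N.
Proof.
rewrite /NE.
have eU : [fset s in fpowerset F | Defs.rel N E s] =
   [fset s in fpowerset (XM F) | Defs.rel M E s] `|` [fset s in fpowerset (F `&` FB) | rB E s].
  apply/fsetP => s; rewrite in_fsetU !memNE /=.
  apply/andP/orP.
  - move=> [sF /orP [h|h]]; [left|right]; apply/andP; split=> //.
    + apply/fsubsetP=> x xs; rewrite inXM (fsubsetP sF x xs) /=; apply/implyP=> xb.
      apply: FBM xb _; have [_ hs] := wfM _ _ h; exact: hs x xs.
    + rewrite fsubsetI sF; apply/fsubsetP => x xs; exact: (wfB _ _ h).2 x xs.
  - move=> [/andP [sX h]|/andP [sY h]]; split; rewrite ?h ?orbT //.
    + apply: fsubset_trans sX _; apply/fsubsetP => x; rewrite inXM => /andP [] //.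
    + exact: fsubset_trans sY (fsubsetIl _ _).
have eI : [fset s in fpowerset (F `&` FA) | rA E s] =
   [fset s in fpowerset (XM F) | Defs.rel M E s] `&` [fset s in fpowerset (F `&` FB) | rB E s].
  apply/fsetP => s; rewrite in_fsetI !memNE.
  rewrite andbACA -fsubsetI XMI.
  case sZ: (s `<=` F `&` FA) => //=.
  have sA : forall x, x \in s -> x \in FA.
    by move=> x xs; have := fsubsetP sZ x xs; rewrite in_fsetI => /andP [].
  have e1 : rA E s = Defs.rel M E s := subAM.2 E s sA.
  have e2 : rA E s = rB E s := subAB.2 E s sA.
  by rewrite -e1 -e2 andbb.
rewrite eU eI; exact: cardfsUI.
Qed.

Lemma delta_decomp F : delta alpha (Defs.rel N) F + delta alpha rA (F `&` FA) =
  delta alpha (Defs.rel M) (XM F) + delta alpha rB (F `&` FB).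
Proof.
rewrite /delta addrACA [RHS]addrACA -!natrD.
have hc := cardfsUI (XM F) (F `&` FB); rewrite XMU XMI in hc; rewrite hc.
congr (_ + _); rewrite -!opprD -!big_split; congr (- _); apply: eq_bigr => E _ /=.
by rewrite -mulrDr -[in RHS]mulrDr -!natrD NE_decomp.
Qed.

Lemma XM_dom F : fsub_dom F N -> fsub_dom (XM F) M.
Proof.
move=> hF x; rewrite inXM => /andP [xF /implyP xi]; case: (hF x xF) => //= xb.
exact: ((HAB x).1 (xi xb)).2.
Qed.

Lemma N_on_M D : fsub_dom D M -> forall E s, s `<=` D -> Defs.rel N E s = Defs.rel M E s.
Proof.
move=> hD E s sD /=; case h: (rB E s); last by rewrite orbF.
have sA : forall x, x \in s -> x \in FA.
  move=> x xs; apply/HAB; split; [exact: (wfB _ _ h).2 x xs | exact: hD (fsubsetP sD x xs)].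
have e1 : rA E s = Defs.rel M E s := subAM.2 E s sA.
have e2 : rA E s = rB E s := subAB.2 E s sA.
by rewrite orbT -e1 e2 h.
Qed.

Lemma AB_fact : strong alpha (fin_str FB rB) FA ->
  forall F, delta alpha rA (F `&` FA) <= delta alpha rB (F `&` FB).
Proof.
move=> sB F; set Y := F `&` FB.
have sm := @delta_submod _ _ _ alpha rB Y FA Ha.
have hd : fsub_dom (Y `|` FA) (fin_str FB rB).
  move=> x; rewrite /= in_fsetU in_fsetI => /orP [/andP [_ ->]|/FAB] //.
have [_ h] := sB (Y `|` FA) (fsubsetUr _ _) hd.
have h1 : delta alpha rB FA <= delta alpha rB (Y `|` FA) :=
  h (Y `|` FA) (fsubsetUr _ _) (fsubset_refl _).
have eYA : Y `&` FA = F `&` FA.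
  apply/fsetP => x; rewrite /Y !in_fsetI.
  have := @FAB x; case: (x \in FA) => [/(_ isT) ->|_]; by case: (x \in F); case: (x \in FB).
have e : delta alpha rB (F `&` FA) = delta alpha rA (F `&` FA).
  apply: delta_eq => E s sZ.
  have sA : forall x, x \in s -> x \in FA.
    by move=> x xs; have := fsubsetP sZ x xs; rewrite in_fsetI => /andP [].
  exact: esym (subAB.2 E s sA).
rewrite eYA e in sm; lra.
Qed.

Lemma AM_fact : strong alpha M FA ->
  forall F, fsub_dom F N -> delta alpha rA (F `&` FA) <= delta alpha (Defs.rel M) (XM F).
Proof.
move=> sM F hF; set X := XM F.
have sm := @delta_submod _ _ _ alpha (Defs.rel M) X FA Ha.
have hd : fsub_dom (X `|` FA) M.
  move=> x; rewrite in_fsetU => /orP [/(@XM_dom F hF)|xa] //; exact: subAM.1 x xa.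
have [_ h] := sM (X `|` FA) (fsubsetUr _ _) hd.
have h1 : delta alpha (Defs.rel M) FA <= delta alpha (Defs.rel M) (X `|` FA) :=
  h (X `|` FA) (fsubsetUr _ _) (fsubset_refl _).
have eXA : X `&` FA = F `&` FA.
  apply/fsetP => x; rewrite /X !in_fsetI inXM.
  by case: (x \in FA); case: (x \in F); case: (x \in FB).
have e : delta alpha (Defs.rel M) (F `&` FA) = delta alpha rA (F `&` FA).
  apply: delta_eq => E s sZ.
  have sA : forall x, x \in s -> x \in FA.
    by move=> x xs; have := fsubsetP sZ x xs; rewrite in_fsetI => /andP [].
  exact: esym (subAM.2 E s sA).
rewrite eXA e in sm; lra.
Qed.


Lemma part1 : models_Sforall alpha M -> inK alpha rB FB ->
  (strong alpha (fin_str FB rB) FA \/ strong alpha M FA) -> models_Sforall alpha N.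
Proof.
move=> modM inB Hs F hF F' sF'.
have hF' : fsub_dom F' N := fun x xF => hF x (fsubsetP sF' x xF).
have d := delta_decomp F'.
have m0 : 0 <= delta alpha (Defs.rel M) (XM F') :=
  modM (XM F') (@XM_dom F' hF') (XM F') (fsubset_refl _).
have b0 : 0 <= delta alpha rB (F' `&` FB) := inB (F' `&` FB) (fsubsetIr _ _).
case: Hs => [sB|sM]; [have := AB_fact sB F' | have := AM_fact sM F' hF']; lra.
Qed.

Lemma part2 : strong alpha (fin_str FB rB) FA -> preserves_closures alpha M N.
Proof.
move=> sB X XMd cX A' B' hA' hB' mp x xB.
set D := XM B'.
have hD : fsub_dom D M := @XM_dom B' hB'.
have AD : A' `<=` D.
  apply/fsubsetP => y yA; rewrite inXM (fsubsetP mp.1 y yA) /=; apply/implyP => yb.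
  exact: FBM yb (XMd y (hA' y yA)).
case: (boolP (B' `<=` D)) => BD.
  have hBM : fsub_dom B' M := fun y yB => hD y (fsubsetP BD y yB).
  have mpM := @minpair_eq _ _ _ alpha (Defs.rel N) (Defs.rel M) A' B' (@N_on_M B' hBM) mp.
  exact: cX A' B' hA' hBM mpM x xB.
exfalso.
have DB : D `<` B'.
  by rewrite fproperE BD andbT /D /XM fsubsetDl.
case: mp => [AB [HC HN]]; apply: HN; split=> // C' AC' CB.
have [_ hle] := HC D AD DB.
have h1 := hle D AD (fsubset_refl _).
case: (boolP (C' == B')) => [/eqP ->|ne].
  have e : delta alpha (Defs.rel N) D = delta alpha (Defs.rel M) D :=
    @delta_eq _ _ _ alpha _ _ D (@N_on_M D hD).
  have d := delta_decomp B'.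
  have := AB_fact sB B'.
  rewrite -/D in d; lra.
have CB' : C' `<` B' by rewrite fproperEneq ne CB.
have [_ h2] := HC C' AC' CB'.
exact: h2 C' AC' (fsubset_refl _).
Qed.

Lemma part3 : strong alpha M FA -> strong alpha N FB.
Proof.
move=> sM C FBC hC; split=> // C' FBC' C'C.
have hC' : fsub_dom C' N := fun x xC => hC x (fsubsetP C'C x xC).
have FAC : FA `<=` C'.
  by apply/fsubsetP => y ya; apply: (fsubsetP FBC'); exact: FAB.
have d1 := delta_decomp C'; have d2 := delta_decomp FB.
have e1 : C' `&` FA = FA by apply/fsetIidPr.
have e2 : C' `&` FB = FB by apply/fsetIidPr.
have e3 : FB `&` FA = FA by apply/fsetIidPr; apply/fsubsetP => y; exact: FAB.
have e5 : XM FB = FA.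
  apply/fsetP => y; rewrite inXM.
  have := @FAB y; case: (y \in FA) => [/(_ isT) ->|_] //; by case: (y \in FB).
have FAX : FA `<=` XM C'.
  by apply/fsubsetP => y ya; rewrite inXM (fsubsetP FAC y ya) ya implybT.
have [_ h] := sM (XM C') FAX (@XM_dom C' hC').
have := h (XM C') FAX (fsubset_refl _).
rewrite e1 e2 in d1; rewrite e3 e5 fsetIid in d2; lra.
Qed.

Lemma part4 : finite_closures alpha M -> finite_closures alpha N.
Proof.
move=> fcM F hF.
have hF0 : fsub_dom (XM F `|` FA) M.
  move=> y; rewrite in_fsetU => /orP [/(@XM_dom F hF)|ya] //; exact: subAM.1 y ya.
have [G [FG hG sG]] := fcM _ hF0.
have FAG : FA `<=` G := fsubset_trans (fsubsetUr _ _) FG.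
exists (G `|` FB); split.
- apply/fsubsetP => y yF; rewrite in_fsetU; case yb: (y \in FB); rewrite ?orbT //.
  apply/orP; left; apply: (fsubsetP FG); rewrite in_fsetU inXM yF yb //.
- by move=> y; rewrite in_fsetU => /orP [/hG|yb]; [left|right].
move=> C GC hC; split=> // C' GC' C'C.
have hC' : fsub_dom C' N := fun x xC => hC x (fsubsetP C'C x xC).
have FBC' : FB `<=` C' := fsubset_trans (fsubsetUr _ _) GC'.
have FAC : FA `<=` C'.
  by apply/fsubsetP => y ya; apply: (fsubsetP FBC'); exact: FAB.
have d1 := delta_decomp C'; have d2 := delta_decomp (G `|` FB).
have e1 : C' `&` FA = FA by apply/fsetIidPr.
have e2 : C' `&` FB = FB by apply/fsetIidPr.
have e3 : (G `|` FB) `&` FA = FA.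
  by apply/fsetIidPr; apply: fsubset_trans FAG (fsubsetUl _ _).
have e4 : (G `|` FB) `&` FB = FB by apply/fsetIidPr; exact: fsubsetUr.
have e5 : XM (G `|` FB) = G.
  apply/fsetP => y; rewrite inXM in_fsetU.
  case yG: (y \in G) => /=.
    by apply/implyP => yb; exact: FBM yb (hG y yG).
  case yb: (y \in FB) => //=; apply/negbTE; apply/negP => ya.
  by move: (fsubsetP FAG y ya); rewrite yG.
have GX : G `<=` XM C'.
  apply/fsubsetP => y yG; rewrite inXM (fsubsetP GC' y (fsubsetP (fsubsetUl _ _) y yG)) /=.
  by apply/implyP => yb; exact: FBM yb (hG y yG).
have [_ h] := sG (XM C') GX (@XM_dom C' hC').
have := h (XM C') GX (fsubset_refl _).
rewrite e1 e2 in d1; rewrite e3 e4 e5 in d2; lra.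
Qed.

End S.

Theorem lemma5p11 (L : finType) (U : choiceType) (R : realType)
  (ar : L -> nat) (alpha : L -> R)
  (Har : forall E, (2 <= ar E)%N)
  (Halpha : forall E, 0 < alpha E <= 1)
  (Hnot : ~ (forall E, ar E = 2%N /\ alpha E = 1))
  (M : Lstr L U) (FA FB : {fset U}) (rA rB : L -> {fset U} -> bool) :
  let A := fin_str FA rA in
  let B := fin_str FB rB in
  let N := join M B in
  wf ar M -> wf ar A -> wf ar B ->
  models_Sforall alpha M ->
  inK alpha rA FA -> inK alpha rB FB ->
  is_substr A M -> is_substr A B ->
  (forall x, x \in FA <-> (x \in FB /\ dom M x)) ->
  [/\ (strong alpha B FA \/ strong alpha M FA) -> models_Sforall alpha N,
      strong alpha B FA -> preserves_closures alpha M N,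
      strong alpha M FA -> strong alpha N FB &
      (strong alpha B FA \/ strong alpha M FA) ->
        finite_closures alpha M -> finite_closures alpha N].
Proof.
move=> A B N wfM wfA wfB modM inA inB sAM sAB HAB.
have Ha : forall E, 0 <= alpha E by move=> E; case/andP: (Halpha E) => /ltW.
split.
- by eapply part1; eauto.
- by eapply part2; eauto.
- by eapply part3; eauto.
- by move=> _; eapply part4; eauto.
Qed.
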